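(* For all well-typed terms $\Gamma\vdash t:A$ and $\Gamma\vdash u:A$ of $\lambda^{SJ}$: $\Gamma\vdash t\equiv u:A$ holds in $\lambda^{SJ}$ if and only if $[\![t]\!]=[\![u]\!]:[\![\Gamma]\!]\to[\![A]\!]$ in every categorical model of $\lambda^{SJ}$ (every cartesian closed category with a strong semimonad, for every interpretation of the base type).
   Context: Types: $A,B ::= \iota \mid 1 \mid A\times B \mid A\to B \mid \Diamond A$, where $\iota$ is a base type. A context $\Gamma$ is a list $x_1:A_1,\dots,x_n:A_n$ of distinct variables. Terms of the simply typed part: variables, $()$, $\langle t,u\rangle$, $\mathsf{fst}\,t$, $\mathsf{snd}\,t$, $\lambda x.t$, $t\,u$, with the standard typing rules. The calculus $\lambda^{SJ}$ adds: (letmap) if $\Gamma\vdash t:\Diamond A$ and $\Gamma,x:A\vdash u:B$ then $\Gamma\vdash \mathsf{letmap}\ x=t\ \mathsf{in}\ u:\Diamond B$; (let) if $\Gamma\vdash t:\Diamond A$ and $\Gamma,x:A\vdash u:\Diamond B$ then $\Gamma\vdash\mathsf{let}\ x=t\ \mathsf{in}\ u:\Diamond B$. Its equational theory $\equiv$ is the least congruence on well-typed terms containing the simply typed $\beta\eta$-laws ($t\equiv()$ for $t:1$; $t\equiv\langle\mathsf{fst}\,t,\mathsf{snd}\,t\rangle$; $\mathsf{fst}\langle t,u\rangle\equiv t$; $\mathsf{snd}\langle t,u\rangle\equiv u$; $t\equiv\lambda x.\,t\,x$ with $x$ fresh; $(\lambda x.t)\,u\equiv t[u/x]$) and: $t\equiv\mathsf{letmap}\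 x=t\ \mathsf{in}\ x$; $\mathsf{letmap}\ y=(\mathsf{letmap}\ x=t\ \mathsf{in}\ u)\ \mathsf{in}\ u'\equiv\mathsf{letmap}\ x=t\ \mathsf{in}\ u'[u/y]$; $\mathsf{let}\ y=(\mathsf{letmap}\ x=t\ \mathsf{in}\ u)\ \mathsf{in}\ u'\equiv\mathsf{let}\ x=t\ \mathsf{in}\ u'[u/y]$; $\mathsf{letmap}\ y=(\mathsf{let}\ x=t\ \mathsf{in}\ u)\ \mathsf{in}\ u'\equiv\mathsf{let}\ x=t\ \mathsf{in}\ (\mathsf{letmap}\ y=u\ \mathsf{in}\ u')$; $\mathsf{let}\ y=(\mathsf{let}\ x=t\ \mathsf{in}\ u)\ \mathsf{in}\ u'\equiv\mathsf{let}\ x=t\ \mathsf{in}\ (\mathsf{let}\ y=u\ \mathsf{in}\ u')$ (terms implicitly weakened where needed). A categorical model of $\lambda^{SJ}$ is a cartesian closed category $\mathcal C$ with an endofunctor $D$, a strength $\mathrm{st}_{X,Y}:X\times DY\to D(X\times Y)$ (natural, with $D\pi_2\circ\mathrm{st}_{1,X}=\pi_2$ and $D\alpha\circ\mathrm{st}_{X\times Y,Z}=\mathrm{st}_{X,Y\times Z}\circ(\mathrm{id}\times\mathrm{st}_{Y,Z})\circ\alpha$), and a natural transformation $\mu:DD\Rightarrow D$ that is associative ($\mu_X\circ\mu_{DX}=\mu_X\circ D\mu_X$) and strong ($\mu_{X\times Y}\circ D\mathrm{st}_{X,Y}\circ\mathrm{st}_{X,DY}=\mathrm{st}_{X,Y}\circ(\mathrm{id}_X\times\mu_Y)$).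 Given an object interpreting $\iota$, types/contexts/simply typed terms are interpreted in the standard cartesian closed way with $[\![\Diamond A]\!]=D[\![A]\!]$, $[\![\mathsf{letmap}\ x=t\ \mathsf{in}\ u]\!]=D[\![u]\!]\circ\mathrm{st}\circ\langle\mathrm{id},[\![t]\!]\rangle$ and $[\![\mathsf{let}\ x=t\ \mathsf{in}\ u]\!]=\mu\circ D[\![u]\!]\circ\mathrm{st}\circ\langle\mathrm{id},[\![t]\!]\rangle$. *)

(* Defs.v *)
From Stdlib Require Import List.
Import ListNotations.

Set Implicit Arguments.

(* A context is a list of types; the head is the most recent variable. *)

Inductive ty : Set :=
| Base : ty
| Unit : ty
| Prod : ty -> ty -> ty
| Arr  : ty -> ty -> ty
| Dia  : ty -> ty.

Definition ctx := list ty.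

Inductive var : ctx -> ty -> Type :=
| VZ : forall G A, var (A :: G) A
| VS : forall G A B, var G A -> var (B :: G) A.
Arguments VZ {G A}.
Arguments VS {G A B} _.

Inductive tm : ctx -> ty -> Type :=
| tvar : forall G A, var G A -> tm G A
| tunit : forall G, tm G Unit
| tpair : forall G A B, tm G A -> tm G B -> tm G (Prod A B)
| tfst : forall G A B, tm G (Prod A B) -> tm G A
| tsnd : forall G A B, tm G (Prod A B) -> tm G B
| tlam : forall G A B, tm (A :: G) B -> tm G (Arr A B)
| tapp : forall G A B, tm G (Arr A B) -> tm G A -> tm G B
| tletmap : forall G A B, tm G (Dia A) -> tm (A :: G) B -> tm G (Dia B)
| tlet : forall G A B, tm G (Dia A) -> tm (A :: G) (Dia B) -> tm G (Dia B).
Arguments tvar {G A} _.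
Arguments tunit {G}.
Arguments tpair {G A B} _ _.
Arguments tfst {G A B} _.
Arguments tsnd {G A B} _.
Arguments tlam {G A B} _.
Arguments tapp {G A B} _ _.
Arguments tletmap {G A B} _ _.
Arguments tlet {G A B} _ _.

Definition renaming (G D : ctx) := forall C, var G C -> var D C.
Definition substitution (G D : ctx) := forall C, var G C -> tm D C.

Definition ren_lift {G D : ctx} (B : ty) (r : renaming G D) : renaming (B :: G) (B :: D) :=
  fun A v =>
    match v in var L A0
      return match L with
             | [] => unit
             | B' :: G' => renaming G' D -> var (B' :: D) A0
             end with
    | VZ => fun _ => VZ
    | VS v' => fun r' => VS (r' _ v')
    end r.

Fixpoint ren {G A} (t : tm G A) : forall D, renaming G D -> tm D A :=
  match t in tm G0 A0 return forall D, renaming G0 D -> tm D A0 with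
  | tvar v => fun D r => tvar (r _ v)
  | tunit => fun D r => tunit
  | tpair t1 t2 => fun D r => tpair (ren t1 r) (ren t2 r)
  | tfst t1 => fun D r => tfst (ren t1 r)
  | tsnd t1 => fun D r => tsnd (ren t1 r)
  | tlam t1 => fun D r => tlam (ren t1 (@ren_lift _ _ _ r))
  | tapp t1 t2 => fun D r => tapp (ren t1 r) (ren t2 r)
  | tletmap t1 t2 => fun D r => tletmap (ren t1 r) (ren t2 (@ren_lift _ _ _ r))
  | tlet t1 t2 => fun D r => tlet (ren t1 r) (ren t2 (@ren_lift _ _ _ r))
  end.

Definition wk {G A} (B : ty) (t : tm G A) : tm (B :: G) A :=
  ren t (fun C v => @VS G C B v).

Definition scons {G D : ctx} {B : ty} (u : tm D B) (s : substitution G D)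
  : substitution (B :: G) D :=
  fun A v =>
    match v in var L A0
      return match L with
             | [] => unit
             | B' :: G' => tm D B' -> substitution G' D -> tm D A0
             end with
    | VZ => fun u' _ => u'
    | VS v' => fun _ s' => s' _ v'
    end u s.

Definition sub_lift {G D : ctx} (B : ty) (s : substitution G D)
  : substitution (B :: G) (B :: D) :=
  scons (tvar VZ) (fun C v => wk B (s C v)).

Fixpoint sub {G A} (t : tm G A) : forall D, substitution G D -> tm D A :=
  match t in tm G0 A0 return forall D, substitution G0 D -> tm D A0 with
  | tvar v => fun D s => s _ v
  | tunit => fun D s => tunit
  | tpair t1 t2 => fun D s => tpair (sub t1 s) (sub t2 s)
  | tfst t1 => fun D s => tfst (sub t1 s)
  | tsnd t1 => fun D s => tsnd (sub t1 s)
  | tlam t1 => fun D s => tlam (sub t1 (@sub_lift _ _ _ s))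
  | tapp t1 t2 => fun D s => tapp (sub t1 s) (sub t2 s)
  | tletmap t1 t2 => fun D s => tletmap (sub t1 s) (sub t2 (@sub_lift _ _ _ s))
  | tlet t1 t2 => fun D s => tlet (sub t1 s) (sub t2 (@sub_lift _ _ _ s))
  end.

Definition ids {G : ctx} : substitution G G := fun C v => tvar v.

Definition subst1 {G A B} (t : tm (B :: G) A) (u : tm G B) : tm G A :=
  sub t (scons u ids).

(* u'[u/y] where G, y:B |- u' : C and G, x:A |- u : B  (u' weakened by x) *)
Definition subst_under {G A B C} (u' : tm (B :: G) C) (u : tm (A :: G) B)
  : tm (A :: G) C :=
  sub u' (scons u (fun C v => tvar (@VS G C A v))).

Definition wk_under {G B C} (A : ty) (u' : tm (B :: G) C) : tm (B :: A :: G) C :=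
  ren u' (@ren_lift G (A :: G) B (fun C v => @VS G C A v)).

Inductive teq : forall G A, tm G A -> tm G A -> Prop :=
| teq_refl : forall G A (t : tm G A), teq t t
| teq_sym : forall G A (t u : tm G A), teq t u -> teq u t
| teq_trans : forall G A (t u v : tm G A), teq t u -> teq u v -> teq t v
| teq_pair : forall G A B (t t' : tm G A) (u u' : tm G B),
    teq t t' -> teq u u' -> teq (tpair t u) (tpair t' u')
| teq_fst : forall G A B (t t' : tm G (Prod A B)), teq t t' -> teq (tfst t) (tfst t')
| teq_snd : forall G A B (t t' : tm G (Prod A B)), teq t t' -> teq (tsnd t) (tsnd t')
| teq_lam : forall G A B (t t' : tm (A :: G) B), teq t t' -> teq (tlam t) (tlam t')
| teq_app : forall G A B (t t' : tm G (Arr A B)) (u u' : tm G A),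
    teq t t' -> teq u u' -> teq (tapp t u) (tapp t' u')
| teq_letmap : forall G A B (t t' : tm G (Dia A)) (u u' : tm (A :: G) B),
    teq t t' -> teq u u' -> teq (tletmap t u) (tletmap t' u')
| teq_let : forall G A B (t t' : tm G (Dia A)) (u u' : tm (A :: G) (Dia B)),
    teq t t' -> teq u u' -> teq (tlet t u) (tlet t' u')
| teq_unit_eta : forall G (t : tm G Unit), teq t tunit
| teq_pair_eta : forall G A B (t : tm G (Prod A B)), teq t (tpair (tfst t) (tsnd t))
| teq_fst_beta : forall G A B (t : tm G A) (u : tm G B), teq (tfst (tpair t u)) t
| teq_snd_beta : forall G A B (t : tm G A) (u : tm G B), teq (tsnd (tpair t u)) u
| teq_lam_eta : forall G A B (t : tm G (Arr A B)),
    teq t (tlam (tapp (wk A t) (tvar VZ)))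
| teq_lam_beta : forall G A B (t : tm (A :: G) B) (u : tm G A),
    teq (tapp (tlam t) u) (subst1 t u)
| teq_letmap_id : forall G A (t : tm G (Dia A)), teq t (tletmap t (tvar VZ))
| teq_letmap_letmap : forall G A B C (t : tm G (Dia A)) (u : tm (A :: G) B)
    (u' : tm (B :: G) C),
    teq (tletmap (tletmap t u) u') (tletmap t (subst_under u' u))
| teq_let_letmap : forall G A B C (t : tm G (Dia A)) (u : tm (A :: G) B)
    (u' : tm (B :: G) (Dia C)),
    teq (tlet (tletmap t u) u') (tlet t (subst_under u' u))
| teq_letmap_let : forall G A B C (t : tm G (Dia A)) (u : tm (A :: G) (Dia B))
    (u' : tm (B :: G) C),
    teq (tletmap (tlet t u) u') (tlet t (tletmap u (wk_under A u')))
| teq_let_let : forall G A B C (t : tm G (Dia A)) (u : tm (A :: G) (Dia B))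
    (u' : tm (B :: G) (Dia C)),
    teq (tlet (tlet t u) u') (tlet t (tlet u (wk_under A u'))).

Record Category := {
  Ob : Type;
  Hom : Ob -> Ob -> Type;
  idm : forall X, Hom X X;
  comp : forall X Y Z, Hom Y Z -> Hom X Y -> Hom X Z;   (* comp g f = g o f *)
  comp_id_l : forall X Y (f : Hom X Y), comp (idm Y) f = f;
  comp_id_r : forall X Y (f : Hom X Y), comp f (idm X) = f;
  comp_assoc : forall X Y Z W (f : Hom X Y) (g : Hom Y Z) (h : Hom Z W),
      comp h (comp g f) = comp (comp h g) f
}.
Arguments idm {c} X.
Arguments comp {c X Y Z} _ _.

Record CCC := {
  cat :> Category;
  one : Ob cat;
  bang : forall X, Hom cat X one;
  bang_unique : forall X (f : Hom cat X one), f = bang X;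
  prod : Ob cat -> Ob cat -> Ob cat;
  pi1 : forall X Y, Hom cat (prod X Y) X;
  pi2 : forall X Y, Hom cat (prod X Y) Y;
  pair : forall Z X Y, Hom cat Z X -> Hom cat Z Y -> Hom cat Z (prod X Y);
  pi1_pair : forall Z X Y (f : Hom cat Z X) (g : Hom cat Z Y),
      comp (pi1 X Y) (pair Z X Y f g) = f;
  pi2_pair : forall Z X Y (f : Hom cat Z X) (g : Hom cat Z Y),
      comp (pi2 X Y) (pair Z X Y f g) = g;
  pair_unique : forall Z X Y (f : Hom cat Z X) (g : Hom cat Z Y) (h : Hom cat Z (prod X Y)),
      comp (pi1 X Y) h = f -> comp (pi2 X Y) h = g -> h = pair Z X Y f g;
  exp : Ob cat -> Ob cat -> Ob cat;              (* exp X Y = Y^X *)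
  ev : forall X Y, Hom cat (prod (exp X Y) X) Y;
  curry : forall Z X Y, Hom cat (prod Z X) Y -> Hom cat Z (exp X Y);
  ev_curry : forall Z X Y (f : Hom cat (prod Z X) Y),
      comp (ev X Y) (pair (prod Z X) (exp X Y) X (comp (curry Z X Y f) (pi1 Z X)) (comp (idm X) (pi2 Z X))) = f;
  curry_unique : forall Z X Y (f : Hom cat (prod Z X) Y) (g : Hom cat Z (exp X Y)),
      comp (ev X Y) (pair (prod Z X) (exp X Y) X (comp g (pi1 Z X)) (comp (idm X) (pi2 Z X))) = f ->
      g = curry Z X Y f
}.
Arguments one {c}.
Arguments bang {c} X.
Arguments prod {c} _ _.
Arguments pi1 {c} X Y.
Arguments pi2 {c} X Y.
Arguments pair {c Z X Y} _ _.
Arguments exp {c} _ _.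
Arguments ev {c} X Y.
Arguments curry {c Z X Y} _.

Definition fprod {C : CCC} {X Y X' Y' : Ob C} (f : Hom C X X') (g : Hom C Y Y')
  : Hom C (prod X Y) (prod X' Y') :=
  pair (comp f (pi1 X Y)) (comp g (pi2 X Y)).

Definition assoc {C : CCC} (X Y Z : Ob C) : Hom C (prod (prod X Y) Z) (prod X (prod Y Z)) :=
  pair (comp (pi1 X Y) (pi1 (prod X Y) Z))
       (pair (comp (pi2 X Y) (pi1 (prod X Y) Z)) (pi2 (prod X Y) Z)).

Record SJModel := {
  ccc :> CCC;
  D : Ob ccc -> Ob ccc;
  Dmap : forall X Y, Hom ccc X Y -> Hom ccc (D X) (D Y);
  Dmap_id : forall X, Dmap X X (idm X) = idm (D X);
  Dmap_comp : forall X Y Z (f : Hom ccc X Y) (g : Hom ccc Y Z),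
      Dmap X Z (comp g f) = comp (Dmap Y Z g) (Dmap X Y f);
  st : forall X Y, Hom ccc (prod X (D Y)) (D (prod X Y));
  st_natural : forall X X' Y Y' (f : Hom ccc X X') (g : Hom ccc Y Y'),
      comp (st X' Y') (fprod f (Dmap Y Y' g)) = comp (Dmap (prod X Y) (prod X' Y') (fprod f g)) (st X Y);
  st_unit : forall X,
      comp (Dmap (prod one X) X (pi2 one X)) (st one X) = pi2 one (D X);
  st_assoc : forall X Y Z,
      comp (Dmap _ _ (assoc X Y Z)) (st (prod X Y) Z)
      = comp (st X (prod Y Z)) (comp (fprod (idm X) (st Y Z)) (assoc X Y (D Z)));
  mu : forall X, Hom ccc (D (D X)) (D X);
  mu_natural : forall X Y (f : Hom ccc X Y),
      comp (Dmap X Y f) (mu X) = comp (mu Y) (Dmap _ _ (Dmap X Y f));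
  mu_assoc : forall X, comp (mu X) (mu (D X)) = comp (mu X) (Dmap _ _ (mu X));
  mu_strong : forall X Y,
      comp (mu (prod X Y)) (comp (Dmap _ _ (st X Y)) (st X (D Y)))
      = comp (st X Y) (fprod (idm X) (mu Y))
}.
Arguments D {s} _.
Arguments Dmap {s X Y} _.
Arguments st {s} X Y.
Arguments mu {s} X.

Section Interp.
Variables (M : SJModel) (b : Ob M).

Fixpoint ity (A : ty) : Ob M :=
  match A with
  | Base => b
  | Unit => one
  | Prod A1 A2 => prod (ity A1) (ity A2)
  | Arr A1 A2 => exp (ity A1) (ity A2)
  | Dia A1 => D (ity A1)
  end.

Fixpoint ictx (G : ctx) : Ob M :=
  match G with
  | [] => one
  | A :: G' => prod (ictx G') (ity A)
  end.

Fixpoint ivar {G A} (v : var G A) : Hom M (ictx G) (ity A) :=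
  match v in var G0 A0 return Hom M (ictx G0) (ity A0) with
  | @VZ G0 A0 => pi2 (ictx G0) (ity A0)
  | @VS G0 A0 B0 v' => comp (ivar v') (pi1 (ictx G0) (ity B0))
  end.

Fixpoint interp {G A} (t : tm G A) : Hom M (ictx G) (ity A) :=
  match t in tm G0 A0 return Hom M (ictx G0) (ity A0) with
  | tvar v => ivar v
  | @tunit G0 => bang (ictx G0)
  | tpair t1 t2 => pair (interp t1) (interp t2)
  | @tfst G0 A1 A2 t1 => comp (pi1 (ity A1) (ity A2)) (interp t1)
  | @tsnd G0 A1 A2 t1 => comp (pi2 (ity A1) (ity A2)) (interp t1)
  | tlam t1 => curry (interp t1)
  | @tapp G0 A1 A2 t1 t2 => comp (ev (ity A1) (ity A2)) (pair (interp t1) (interp t2))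
  | @tletmap G0 A1 A2 t1 t2 =>
      comp (Dmap (interp t2))
           (comp (st (ictx G0) (ity A1)) (pair (idm (ictx G0)) (interp t1)))
  | @tlet G0 A1 A2 t1 t2 =>
      comp (mu (ity A2))
        (comp (Dmap (interp t2))
           (comp (st (ictx G0) (ity A1)) (pair (idm (ictx G0)) (interp t1))))
  end.

End Interp.

(* Main.v *)
Require Import Defs.
From Stdlib Require Import List FunctionalExtensionality Program.Equality
  ProofIrrelevance PropExtensionality ClassicalEpsilon Setoid Morphisms JMeq.
Import ListNotations.

Lemma var_case {G B} (P : forall A, var (B::G) A -> Type)
  (hz : P B VZ) (hs : forall A (v : var G A), P A (VS v)) : forall A v, P A v.
Proof. intros A v. dependent destruction v; auto. Defined.

Lemma var_nil {A} (v : var [] A) : False.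
Proof. dependent destruction v. Qed.

Ltac fext := apply functional_extensionality_dep; intro; apply functional_extensionality; intro.

Lemma ren_ren {G A} (t : tm G A) : forall D E (r1 : renaming G D) (r2 : renaming D E),
  ren (ren t r1) r2 = ren t (fun C v => r2 C (r1 C v)).
Proof.
  induction t; intros; simpl; f_equal; auto;
  try (rewrite IHt2 || rewrite IHt); f_equal; fext;
  match goal with v : var _ ?x |- _ => revert x v end; apply var_case; reflexivity.
Qed.

Lemma ren_sub {G A} (t : tm G A) : forall D E (s : substitution G D) (r : renaming D E),
  ren (sub t s) r = sub t (fun C v => ren (s C v) r).
Proof.
  induction t; intros; simpl; f_equal; auto;
  try (rewrite IHt2 || rewrite IHt); f_equal; fext;
  match goal with v : var _ ?x |- _ => revert x v end; apply var_case; try reflexivity;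
  intros; simpl; unfold wk; rewrite !ren_ren; reflexivity.
Qed.

Lemma sub_ren {G A} (t : tm G A) : forall D E (r : renaming G D) (s : substitution D E),
  sub (ren t r) s = sub t (fun C v => s C (r C v)).
Proof.
  induction t; intros; simpl; f_equal; auto;
  try (rewrite IHt2 || rewrite IHt); f_equal; fext;
  match goal with v : var _ ?x |- _ => revert x v end; apply var_case; reflexivity.
Qed.

Lemma sub_sub {G A} (t : tm G A) : forall D E (s1 : substitution G D) (s2 : substitution D E),
  sub (sub t s1) s2 = sub t (fun C v => sub (s1 C v) s2).
Proof.
  induction t; intros; simpl; f_equal; auto;
  try (rewrite IHt2 || rewrite IHt); f_equal; fext;
  match goal with v : var _ ?x |- _ => revert x v end; apply var_case; try reflexivity;
  intros; simpl; unfold wk; rewrite sub_ren, ren_sub; reflexivity.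
Qed.

Lemma ren_as_sub {G A} (t : tm G A) : forall D (r : renaming G D),
  ren t r = sub t (fun C v => tvar (r C v)).
Proof.
  induction t; intros; simpl; f_equal; auto;
  try (rewrite IHt2 || rewrite IHt); f_equal; fext;
  match goal with v : var _ ?x |- _ => revert x v end; apply var_case; reflexivity.
Qed.

Lemma sub_ids {G A} (t : tm G A) : sub t ids = t.
Proof.
  induction t; simpl; f_equal; auto;
  match goal with H : _ |- _ => rewrite <- H at 2 end; f_equal; fext;
  match goal with v : var _ ?x |- _ => revert x v end; apply var_case; reflexivity.
Qed.


Ltac vcase := match goal with v : var _ ?x |- _ => revert x v end; apply var_case.

Lemma sub_wk {G D A B} (t : tm G A) (s : substitution G D) :
  sub (wk B t) (@sub_lift _ _ B s) = wk B (sub t s).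
Proof. unfold wk. rewrite sub_ren, ren_sub. reflexivity. Qed.

Lemma sub_subst1 {G D A B} (t : tm (B::G) A) (u : tm G B) (s : substitution G D) :
  sub (subst1 t u) s = subst1 (sub t (@sub_lift _ _ B s)) (sub u s).
Proof.
  unfold subst1. rewrite !sub_sub. f_equal. fext. vcase; [reflexivity|].
  intros. simpl. unfold wk. rewrite sub_ren. simpl. symmetry. apply sub_ids.
Qed.

Lemma sub_subst_under {G D A B C} (u' : tm (B::G) C) (u : tm (A::G) B) (s : substitution G D) :
  sub (subst_under u' u) (@sub_lift _ _ A s) = subst_under (sub u' (@sub_lift _ _ B s)) (sub u (@sub_lift _ _ A s)).
Proof.
  unfold subst_under. rewrite !sub_sub. f_equal. fext. vcase; [reflexivity|].
  intros. simpl. unfold wk. rewrite sub_ren. simpl. rewrite ren_as_sub. reflexivity.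
Qed.

Lemma sub_wk_under {G D A B C} (u' : tm (B::G) C) (s : substitution G D) :
  sub (wk_under A u') (@sub_lift _ _ B (@sub_lift _ _ A s)) = wk_under A (sub u' (@sub_lift _ _ B s)).
Proof.
  unfold wk_under. rewrite sub_ren, ren_sub. f_equal. fext. vcase; [reflexivity|].
  intros. simpl. unfold wk. rewrite !ren_ren. reflexivity.
Qed.

Lemma teq_sub {G A} (t u : tm G A) (H : teq t u) : forall D (s : substitution G D),
  teq (sub t s) (sub u s).
Proof.
  induction H; intros; simpl.
  all: first [ solve [econstructor; eauto]
  | rewrite sub_wk; apply teq_lam_eta
  | rewrite sub_subst1; apply teq_lam_beta
  | rewrite sub_subst_under; apply teq_letmap_letmap
  | rewrite sub_subst_under; apply teq_let_letmap
  | rewrite sub_wk_under; apply teq_letmap_let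
  | rewrite sub_wk_under; apply teq_let_let
  | apply (teq_letmap_id (sub t s)) ].
Qed.

Lemma teq_ren {G A} (t u : tm G A) (H : teq t u) D (r : renaming G D) :
  teq (ren t r) (ren u r).
Proof. rewrite !ren_as_sub. apply teq_sub; auto. Qed.

Lemma teq_sub_cong {G A} (t : tm G A) : forall D (s s' : substitution G D),
  (forall C v, teq (s C v) (s' C v)) -> teq (sub t s) (sub t s').
Proof.
  assert (HL : forall G D B (s s' : substitution G D), (forall C v, teq (s C v) (s' C v)) ->
     forall C v, teq (@sub_lift _ _ B s C v) (sub_lift s' v)).
  { intros G0 D0 B s0 s0' H0. apply var_case; simpl; [constructor|]. intros; unfold wk; apply teq_ren; auto. }
  induction t; intros; simpl; auto; constructor; auto; (apply IHt || apply IHt2); auto.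
Qed.


Section CCCLemmas.
Context {C : CCC}.

Lemma comp_pair {Z X Y W : Ob C} (f : Hom C Z X) (g : Hom C Z Y) (h : Hom C W Z) :
  comp (pair f g) h = pair (comp f h) (comp g h).
Proof. apply pair_unique; rewrite comp_assoc; rewrite ?pi1_pair, ?pi2_pair; auto. Qed.

Lemma pi1_pair_r {Z X Y W : Ob C} (f : Hom C Z X) (g : Hom C Z Y) (h : Hom C W Z) :
  comp (pi1 X Y) (comp (pair f g) h) = comp f h.
Proof. rewrite comp_assoc, pi1_pair; auto. Qed.
Lemma pi2_pair_r {Z X Y W : Ob C} (f : Hom C Z X) (g : Hom C Z Y) (h : Hom C W Z) :
  comp (pi2 X Y) (comp (pair f g) h) = comp g h.
Proof. rewrite comp_assoc, pi2_pair; auto. Qed.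

Lemma pair_pi {X Y : Ob C} : pair (pi1 X Y) (pi2 X Y) = idm (prod X Y).
Proof. symmetry. apply pair_unique; apply comp_id_r. Qed.

Lemma pair_ext {Z X Y : Ob C} (h k : Hom C Z (prod X Y)) :
  comp (pi1 X Y) h = comp (pi1 X Y) k -> comp (pi2 X Y) h = comp (pi2 X Y) k -> h = k.
Proof. intros. transitivity (pair (comp (pi1 X Y) k) (comp (pi2 X Y) k)); [|symmetry]; apply pair_unique; auto. Qed.

Lemma bang_ext {X : Ob C} (f g : Hom C X one) : f = g.
Proof. rewrite (bang_unique _ _ f), (bang_unique _ _ g). auto. Qed.

Lemma ev_curry_gen {Z X Y W : Ob C} (f : Hom C (prod Z X) Y) (g : Hom C W Z) (k : Hom C W X) :
  comp (ev X Y) (pair (comp (curry f) g) k) = comp f (pair g k).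
Proof.
  rewrite <- (ev_curry _ _ _ _ f) at 2. rewrite <- comp_assoc, comp_pair.
  rewrite <- !comp_assoc, pi1_pair, pi2_pair, comp_id_l. auto.
Qed.

End CCCLemmas.

Ltac simp := repeat (rewrite ?comp_id_l, ?comp_id_r, <- ?comp_assoc, ?pi1_pair, ?pi2_pair,
   ?pi1_pair_r, ?pi2_pair_r, ?comp_pair, ?pair_pi; unfold fprod, assoc).

Section Sound.
Variables (M : SJModel) (b : Ob M).

Lemma Dpi2_st (X Y : Ob M) : comp (Dmap (pi2 X Y)) (st X Y) = pi2 X (D Y).
Proof.
  pose proof (st_natural M _ _ _ _ (bang X) (idm Y)) as H.
  rewrite Dmap_id in H.
  assert (E : pi2 X Y = comp (pi2 one Y) (fprod (bang X) (idm Y))) by (unfold fprod; simp; auto).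
  rewrite E, Dmap_comp, <- comp_assoc, <- H, comp_assoc, st_unit. unfold fprod; simp; auto.
Qed.


Notation I := (interp M b).
Notation IC := (ictx M b).

Fixpoint isub {G D} : substitution G D -> Hom M (IC D) (IC G) :=
  match G return substitution G D -> Hom M (IC D) (IC G) with
  | [] => fun _ => bang _
  | A :: G' => fun s => pair (isub (fun C v => s C (VS v))) (I (s A VZ))
  end.

Lemma ivar_sub {G A} (v : var G A) : forall D (s : substitution G D),
  I (s A v) = comp (ivar M b v) (isub s).
Proof.
  induction v; intros; simpl; simp; auto.
  rewrite <- IHv. auto.
Qed.

Fixpoint iren {G D} : renaming G D -> Hom M (IC D) (IC G) :=
  match G return renaming G D -> Hom M (IC D) (IC G) with
  | [] => fun _ => bang _
  | A :: G' => fun r => pair (iren (fun C v => r C (VS v))) (ivar M b (r A VZ))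
  end.

Lemma ivar_ren {G A} (v : var G A) : forall D (r : renaming G D),
  ivar M b (r A v) = comp (ivar M b v) (iren r).
Proof.
  induction v; intros; simpl; simp; auto.
  rewrite <- IHv. auto.
Qed.

Lemma iren_VS {G D B} (r : renaming G D) :
  iren (fun C v => @VS D C B (r C v)) = comp (iren r) (pi1 _ _).
Proof.
  induction G; simpl.
  - apply bang_ext.
  - simp. f_equal. apply (IHG (fun C v => r C (VS v))).
Qed.

Lemma iren_lift {G D B} (r : renaming G D) :
  iren (@ren_lift _ _ B r) = fprod (iren r) (idm _).
Proof. simpl. rewrite (iren_VS r). unfold fprod. simp. auto. Qed.

Lemma st_pair {G E A} (s : Hom M E G) (t : Hom M G (D A)) :
  comp (Dmap (fprod s (idm A))) (comp (st E A) (pair (idm E) (comp t s)))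
  = comp (st G A) (comp (pair (idm G) t) s).
Proof.
  pose proof (st_natural M _ _ _ _ s (idm A)) as H. rewrite Dmap_id in H.
  rewrite comp_assoc, <- H. unfold fprod. simp. auto.
Qed.

Lemma interp_ren {G A} (t : tm G A) : forall D (r : renaming G D),
  I (ren t r) = comp (I t) (iren r).
Proof.
  induction t; intros; simpl.
  - apply ivar_ren.
  - apply bang_ext.
  - rewrite IHt1, IHt2. simp. auto.
  - rewrite IHt. simp. auto.
  - rewrite IHt. simp. auto.
  - rewrite IHt, iren_lift. symmetry. apply curry_unique.
    simp. rewrite !ev_curry_gen. unfold fprod. simp. auto.
  - rewrite IHt1, IHt2. simp. auto.
  - rewrite IHt1, IHt2, iren_lift, Dmap_comp, <- !comp_assoc. f_equal.
    rewrite <- ?comp_assoc. apply st_pair.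
  - rewrite IHt1, IHt2, iren_lift, Dmap_comp, <- !comp_assoc. f_equal. f_equal.
    rewrite <- ?comp_assoc. apply st_pair.
Qed.

Lemma iren_id {G} : iren (fun C (v : var G C) => v) = idm (IC G).
Proof.
  induction G; simpl. apply bang_ext.
  rewrite (iren_VS (fun C (v : var G C) => v)), IHG. simp. auto.
Qed.

Lemma interp_wk {G A B} (t : tm G A) : I (wk B t) = comp (I t) (pi1 _ _).
Proof.
  unfold wk. rewrite interp_ren. f_equal.
  rewrite (iren_VS (fun C (v : var G C) => v)), iren_id. simp. auto.
Qed.

Lemma isub_wk {G D B} (s : substitution G D) :
  isub (fun C v => wk B (s C v)) = comp (isub s) (pi1 _ _).
Proof.
  induction G; simpl. apply bang_ext.
  simp. rewrite interp_wk. f_equal. apply (IHG (fun C v => s C (VS v))).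
Qed.

Lemma isub_lift {G D B} (s : substitution G D) :
  isub (@sub_lift _ _ B s) = fprod (isub s) (idm _).
Proof. simpl. rewrite (isub_wk s). unfold fprod. simp. auto. Qed.

Lemma isub_ids {G} : isub (@ids G) = idm (IC G).
Proof.
  induction G; simpl. apply bang_ext.
  change (fun C (v : var G C) => @ids (a :: G) C (VS v)) with (fun C v => wk a (@ids G C v)).
  rewrite isub_wk, IHG. simp. auto.
Qed.

Lemma interp_sub {G A} (t : tm G A) : forall D (s : substitution G D),
  I (sub t s) = comp (I t) (isub s).
Proof.
  induction t; intros; simpl.
  - apply ivar_sub.
  - apply bang_ext.
  - rewrite IHt1, IHt2. simp. auto.
  - rewrite IHt. simp. auto.
  - rewrite IHt. simp. auto.
  - rewrite IHt, isub_lift. symmetry. apply curry_unique.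
    simp. rewrite !ev_curry_gen. unfold fprod. simp. auto.
  - rewrite IHt1, IHt2. simp. auto.
  - rewrite IHt1, IHt2, isub_lift, Dmap_comp, <- !comp_assoc. f_equal.
    rewrite <- ?comp_assoc. apply st_pair.
  - rewrite IHt1, IHt2, isub_lift, Dmap_comp, <- !comp_assoc. f_equal. f_equal.
    rewrite <- ?comp_assoc. apply st_pair.
Qed.

End Sound.


Section Sound2.
Variables (M : SJModel) (b : Ob M).
Notation I := (interp M b).
Notation IC := (ictx M b).

Lemma st_assoc_r (X Y Z W : Ob M) (h : Hom M W (prod (prod X Y) (D Z))) :
  comp (st X (prod Y Z)) (comp (fprod (idm X) (st Y Z)) (comp (assoc X Y (D Z)) h))
  = comp (Dmap (assoc X Y Z)) (comp (st (prod X Y) Z) h).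
Proof.
  transitivity (comp (comp (st X (prod Y Z)) (comp (fprod (idm X) (st Y Z)) (assoc X Y (D Z)))) h).
  { rewrite <- !comp_assoc. auto. }
  rewrite <- st_assoc, <- comp_assoc. auto.
Qed.

Lemma st_natural_r (X X' Y Y' W : Ob M) (f : Hom M X X') (g : Hom M Y Y') (h : Hom M W (prod X (D Y))) :
  comp (st X' Y') (comp (fprod f (Dmap g)) h) = comp (Dmap (fprod f g)) (comp (st X Y) h).
Proof. rewrite comp_assoc, st_natural, <- comp_assoc. auto. Qed.

Lemma K1 (G A B : Ob M) (u : Hom M (prod G A) B) (t : Hom M G (D A)) :
  comp (st G B) (pair (idm G) (comp (Dmap u) (comp (st G A) (pair (idm G) t))))
  = comp (Dmap (pair (pi1 G A) u)) (comp (st G A) (pair (idm G) t)).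
Proof.
  set (S := comp (st G A) (pair (idm G) t)).
  assert (E1: pair (idm G) (comp (Dmap u) S) = comp (fprod (idm G) (Dmap u)) (pair (idm G) S))
    by (unfold fprod; simp; auto).
  rewrite E1, st_natural_r.
  assert (E2: comp (st G (prod G A)) (pair (idm G) S) =
     comp (st G (prod G A)) (comp (fprod (idm G) (st G A)) (comp (assoc G G (D A)) (pair (pair (idm G) (idm G)) t))))
    by (f_equal; unfold S, fprod, assoc; simp; auto).
  rewrite E2, st_assoc_r.
  assert (E3: pair (pair (idm G) (idm G)) t = comp (fprod (pair (idm G) (idm G)) (Dmap (idm A))) (pair (idm G) t))
    by (rewrite Dmap_id; unfold fprod; simp; auto).
  rewrite E3, st_natural_r. fold S.
  rewrite !comp_assoc, <- !Dmap_comp.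
  f_equal. f_equal. unfold fprod, assoc. simp. auto.
Qed.


Lemma isub_scons_ids {G A} (u : tm G A) : isub M b (scons u ids) = pair (idm _) (I u).
Proof. simpl. change (fun C (v : var G C) => scons u ids (VS v)) with (@ids G). rewrite isub_ids. auto. Qed.

Lemma isub_VSv {G A} : isub M b (fun C (v : var G C) => tvar (@VS _ C A v)) = pi1 _ _.
Proof.
  change (fun C (v : var G C) => tvar (@VS _ C A v)) with (fun C (v : var G C) => wk A (@ids G C v)).
  rewrite isub_wk, isub_ids. simp. auto.
Qed.

Lemma interp_subst_under {G A B C} (u' : tm (B::G) C) (u : tm (A::G) B) :
  I (subst_under u' u) = comp (I u') (pair (pi1 _ _) (I u)).
Proof.
  unfold subst_under. rewrite interp_sub. f_equal. simpl.
  change (fun C0 (v : var G C0) => scons u (fun C1 (v0 : var G C1) => tvar (@VS _ _ A v0)) (VS v))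
    with (fun C0 (v : var G C0) => tvar (@VS _ C0 A v)).
  rewrite isub_VSv. auto.
Qed.

Lemma interp_wk_under {G B C} A (u' : tm (B::G) C) :
  I (wk_under A u') = comp (I u') (fprod (pi1 _ _) (idm _)).
Proof.
  unfold wk_under. rewrite interp_ren, iren_lift. f_equal. f_equal.
  rewrite (iren_VS M b (fun C (v : var G C) => v)), iren_id. simp. auto.
Qed.

Lemma K2 (G A B C : Ob M) (u' : Hom M (prod G B) C) (u : Hom M (prod G A) (D B)) :
  comp (Dmap u') (comp (st G B) (pair (pi1 G A) u))
  = comp (Dmap (comp u' (fprod (pi1 G A) (idm B)))) (comp (st (prod G A) B) (pair (idm _) u)).
Proof.
  assert (E: pair (pi1 G A) u = comp (fprod (pi1 G A) (Dmap (idm B))) (pair (idm _) u))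
    by (rewrite Dmap_id; unfold fprod; simp; auto).
  rewrite E, st_natural_r, Dmap_comp, <- comp_assoc. auto.
Qed.

Lemma mu_strong_r (G B : Ob M) (X : Hom M G (D (D B))) :
  comp (st G B) (pair (idm G) (comp (mu B) X))
  = comp (mu _) (comp (Dmap (st G B)) (comp (st G (D B)) (pair (idm G) X))).
Proof.
  assert (E: pair (idm G) (comp (mu B) X) = comp (fprod (idm G) (mu B)) (pair (idm G) X))
    by (unfold fprod; simp; auto).
  rewrite E, comp_assoc, <- mu_strong. rewrite <- !comp_assoc. auto.
Qed.

Lemma mu_natural_r (X Y W : Ob M) (f : Hom M X Y) (h : Hom M W (D (D X))) :
  comp (Dmap f) (comp (mu X) h) = comp (mu Y) (comp (Dmap (Dmap f)) h).
Proof. rewrite comp_assoc, mu_natural, <- comp_assoc. auto. Qed.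

Lemma mu_assoc_r (X W : Ob M) (h : Hom M W (D (D (D X)))) :
  comp (mu X) (comp (mu (D X)) h) = comp (mu X) (comp (Dmap (mu X)) h).
Proof. rewrite comp_assoc, mu_assoc, <- comp_assoc. auto. Qed.

Theorem soundness {G A} (t u : tm G A) : teq t u -> I t = I u.
Proof.
  induction 1; simpl.
  all: try congruence.
  - apply bang_ext.
  - apply pair_unique; auto.
  - apply pi1_pair.
  - apply pi2_pair.
  - apply curry_unique. rewrite interp_wk. simp. auto.
  - unfold subst1. rewrite interp_sub, isub_scons_ids.
    rewrite <- (comp_id_r _ _ _ (curry _)), ev_curry_gen. auto.
  - rewrite comp_assoc, Dpi2_st. simp. auto.
  - rewrite K1, interp_subst_under, Dmap_comp, <- comp_assoc. auto.
  - rewrite !K1, interp_subst_under, Dmap_comp, <- !comp_assoc. auto.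
  - rewrite interp_wk_under, <- K2, mu_strong_r, K1, !Dmap_comp, <- !comp_assoc, mu_natural_r. auto.
  - rewrite interp_wk_under, <- K2, mu_strong_r, K1, !Dmap_comp, <- !comp_assoc, mu_natural_r, mu_assoc_r. auto.
Qed.

End Sound2.



Definition nosub {D} : substitution [] D := fun C v => False_rect _ (var_nil v).

Lemma sub1_ext {X Y D} (f : tm [X] Y) (s1 s2 : substitution [X] D) :
  s1 X VZ = s2 X VZ -> sub f s1 = sub f s2.
Proof.
  intro H. f_equal. fext. vcase; auto. intros. destruct (var_nil v).
Qed.

Lemma teq_sub1 {X Y D} (f : tm [X] Y) (s1 s2 : substitution [X] D) :
  teq (s1 X VZ) (s2 X VZ) -> teq (sub f s1) (sub f s2).
Proof.
  intro H. apply teq_sub_cong. apply var_case; auto. intros. destruct (var_nil v).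
Qed.

Lemma sub1_id {X Y} (f : tm [X] Y) : sub f (scons (tvar VZ) nosub) = f.
Proof. rewrite <- (sub_ids f) at 2. apply sub1_ext. auto. Qed.

Record Hm (X Y : ty) := { pr : tm [X] Y -> Prop; prex : exists t, pr = teq t }.
Arguments pr {X Y}.
Arguments prex {X Y}.

Definition mk {X Y} (t : tm [X] Y) : Hm X Y := {| pr := teq t; prex := ex_intro _ t eq_refl |}.

Lemma teq_sym' {G A} (t u : tm G A) : teq t u -> teq u t. Proof. apply teq_sym. Qed.

Lemma mk_eq {X Y} (t u : tm [X] Y) : teq t u -> mk t = mk u.
Proof.
  intro H. unfold mk.
  assert (E : teq t = teq u).
  { apply functional_extensionality; intro w. apply propositional_extensionality; split; intro;
    eapply teq_trans; eauto using teq_sym. }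
  generalize (ex_intro (fun t0 => teq t = teq t0) t eq_refl).
  generalize (ex_intro (fun t0 => teq u = teq t0) u eq_refl).
  rewrite E. intros. f_equal. apply proof_irrelevance.
Qed.

Lemma mk_inj {X Y} (t u : tm [X] Y) : mk t = mk u -> teq t u.
Proof. intro H. apply (f_equal pr) in H. simpl in H. rewrite H. apply teq_refl. Qed.

Definition rep {X Y} (h : Hm X Y) : tm [X] Y :=
  proj1_sig (constructive_indefinite_description _ (prex h)).

Lemma mk_rep {X Y} (h : Hm X Y) : mk (rep h) = h.
Proof.
  unfold rep. destruct (constructive_indefinite_description _ (prex h)) as [t E]. simpl.
  destruct h as [P HP]. simpl in *. subst P. unfold mk. f_equal. apply proof_irrelevance.
Qed.

Lemma rep_mk {X Y} (t : tm [X] Y) : teq (rep (mk t)) t.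
Proof. apply mk_inj. apply mk_rep. Qed.

Lemma Hm_ind {X Y} (P : Hm X Y -> Prop) : (forall t, P (mk t)) -> forall h, P h.
Proof. intros H h. rewrite <- mk_rep. apply H. Qed.

Definition lift1 {X Y X' Y'} (F : tm [X] Y -> tm [X'] Y') (h : Hm X Y) : Hm X' Y' := mk (F (rep h)).
Lemma lift1_mk {X Y X' Y'} (F : tm [X] Y -> tm [X'] Y')
  (HF : forall t u, teq t u -> teq (F t) (F u)) t : lift1 F (mk t) = mk (F t).
Proof. apply mk_eq, HF, rep_mk. Qed.

Definition lift2 {X Y X' Y' X'' Y''} (F : tm [X] Y -> tm [X'] Y' -> tm [X''] Y'')
  (h : Hm X Y) (k : Hm X' Y') : Hm X'' Y'' := mk (F (rep h) (rep k)).
Lemma lift2_mk {X Y X' Y' X'' Y''} (F : tm [X] Y -> tm [X'] Y' -> tm [X''] Y'')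
  (HF : forall t u t' u', teq t u -> teq t' u' -> teq (F t t') (F u u')) t t' :
  lift2 F (mk t) (mk t') = mk (F t t').
Proof. apply mk_eq, HF; apply rep_mk. Qed.

Notation x0 := (tvar VZ).
Notation x1 := (tvar (VS VZ)).

Definition rcomp {X Y Z} (g : tm [Y] Z) (f : tm [X] Y) : tm [X] Z := sub g (scons f nosub).
Lemma rcomp_teq {X Y Z} (g g' : tm [Y] Z) (f f' : tm [X] Y) :
  teq g g' -> teq f f' -> teq (rcomp g f) (rcomp g' f').
Proof. intros. eapply teq_trans. apply teq_sub; eauto. apply teq_sub1. auto. Qed.

Definition rcurry {Z X Y} (f : tm [Prod Z X] Y) : tm [Z] (Arr X Y) :=
  tlam (sub f (scons (tpair x1 x0) nosub)).
Lemma rcurry_teq {Z X Y} (f f' : tm [Prod Z X] Y) : teq f f' -> teq (rcurry f) (rcurry f').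
Proof. intros. apply teq_lam, teq_sub; auto. Qed.

Definition rDmap {X Y} (f : tm [X] Y) : tm [Dia X] (Dia Y) :=
  tletmap x0 (sub f (scons x0 nosub)).
Lemma rDmap_teq {X Y} (f f' : tm [X] Y) : teq f f' -> teq (rDmap f) (rDmap f').
Proof. intros. apply teq_letmap. apply teq_refl. apply teq_sub; auto. Qed.

Lemma rpair_teq {Z X Y} (f f' : tm [Z] X) (g g' : tm [Z] Y) :
  teq f f' -> teq g g' -> teq (tpair f g) (tpair f' g').
Proof. intros. apply teq_pair; auto. Qed.

Definition Tcomp {X Y Z} (g : Hm Y Z) (f : Hm X Y) : Hm X Z := lift2 rcomp g f.
Definition Tid X : Hm X X := mk x0.

Lemma Tcomp_mk {X Y Z} (g : tm [Y] Z) (f : tm [X] Y) : Tcomp (mk g) (mk f) = mk (rcomp g f).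
Proof. apply lift2_mk. intros; apply rcomp_teq; auto. Qed.

Ltac hind := repeat match goal with |- forall h : ?T, _ =>
  let T' := eval hnf in T in match T' with Hm _ _ =>
  let x := fresh "h" in intro x; change T' in x; rewrite <- (mk_rep x); generalize (rep x); clear x; intro end end.

Lemma rcomp_assoc {X Y Z W} (f : tm [X] Y) (g : tm [Y] Z) (h : tm [Z] W) :
  rcomp h (rcomp g f) = rcomp (rcomp h g) f.
Proof. unfold rcomp. rewrite sub_sub. apply sub1_ext. reflexivity. Qed.

Definition TCat : Category.
Proof.
  refine {| Ob := ty; Hom := Hm; idm := Tid; comp := @Tcomp |}.
  - intros X Y. hind. unfold Tid. rewrite Tcomp_mk. reflexivity.
  - intros X Y. hind. unfold Tid. rewrite Tcomp_mk. unfold rcomp. rewrite sub1_id. reflexivity.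
  - intros X Y Z W. hind. rewrite !Tcomp_mk, rcomp_assoc. reflexivity.
Defined.

Lemma wk1 {X Y B} (g : tm [X] Y) : wk B g = sub g (scons x1 nosub).
Proof. unfold wk. rewrite ren_as_sub. apply sub1_ext. reflexivity. Qed.

Lemma r_ev_curry {Z X Y} (f : tm [Prod Z X] Y) :
  teq (rcomp (tapp (tfst x0) (tsnd x0)) (tpair (rcomp (rcurry f) (tfst x0)) (rcomp x0 (tsnd x0)))) f.
Proof.
  unfold rcomp, rcurry. simpl.
  eapply teq_trans. apply teq_app. apply teq_fst_beta. apply teq_snd_beta.
  eapply teq_trans. apply teq_lam_beta. unfold subst1. rewrite !sub_sub.
  rewrite <- (sub1_id f) at 2. apply teq_sub1. simpl. apply teq_sym, teq_pair_eta.
Qed.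

Lemma r_curry_unique {Z X Y} (f : tm [Prod Z X] Y) (g : tm [Z] (Arr X Y)) :
  teq (rcomp (tapp (tfst x0) (tsnd x0)) (tpair (rcomp g (tfst x0)) (rcomp x0 (tsnd x0)))) f ->
  teq g (rcurry f).
Proof.
  intro H. eapply teq_trans; [|apply rcurry_teq; exact H].
  unfold rcomp, rcurry. simpl.
  eapply teq_trans. apply teq_lam_eta. apply teq_lam.
  apply teq_sym. eapply teq_trans. apply teq_app. apply teq_fst_beta. apply teq_snd_beta.
  apply teq_app; [|apply teq_snd_beta].
  rewrite wk1, sub_sub. apply teq_sub1. simpl. apply teq_fst_beta.
Qed.

Definition Tbang X : Hm X Unit := mk tunit.
Definition Tpi1 X Y : Hm (Prod X Y) X := mk (tfst x0).
Definition Tpi2 X Y : Hm (Prod X Y) Y := mk (tsnd x0).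
Definition Tpair {Z X Y} (f : Hm Z X) (g : Hm Z Y) : Hm Z (Prod X Y) := lift2 (fun a b => tpair a b) f g.
Definition Tev X Y : Hm (Prod (Arr X Y) X) Y := mk (tapp (tfst x0) (tsnd x0)).
Definition Tcurry {Z X Y} (f : Hm (Prod Z X) Y) : Hm Z (Arr X Y) := lift1 rcurry f.

Lemma Tpair_mk {Z X Y} (f : tm [Z] X) (g : tm [Z] Y) : Tpair (mk f) (mk g) = mk (tpair f g).
Proof. apply lift2_mk. intros; apply teq_pair; auto. Qed.
Lemma Tcurry_mk {Z X Y} (f : tm [Prod Z X] Y) : Tcurry (mk f) = mk (rcurry f).
Proof. apply lift1_mk. apply rcurry_teq. Qed.

Definition TCCC : CCC.
Proof.
  refine {| cat := TCat; one := Unit; bang := Tbang; prod := Prod; pi1 := Tpi1; pi2 := Tpi2;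
            pair := @Tpair; exp := Arr; ev := Tev; curry := @Tcurry |}; simpl.
  - intros X. hind. apply mk_eq, teq_unit_eta.
  - intros Z X Y. hind. unfold Tpi1. rewrite Tpair_mk, Tcomp_mk. apply mk_eq, teq_fst_beta.
  - intros Z X Y. hind. unfold Tpi2. rewrite Tpair_mk, Tcomp_mk. apply mk_eq, teq_snd_beta.
  - intros Z X Y. hind. unfold Tpi1, Tpi2. rewrite Tpair_mk, !Tcomp_mk.
    intros H1 H2. apply mk_inj in H1. apply mk_inj in H2. apply mk_eq.
    eapply teq_trans. apply teq_pair_eta. apply teq_pair; auto.
  - intros Z X Y. hind. unfold Tev, Tpi1, Tpi2, Tid. rewrite Tcurry_mk, !Tcomp_mk, Tpair_mk, Tcomp_mk.
    apply mk_eq, r_ev_curry.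
  - intros Z X Y. hind. unfold Tev, Tpi1, Tpi2, Tid. rewrite Tcurry_mk, !Tcomp_mk, Tpair_mk, Tcomp_mk.
    intro H. apply mk_inj in H. apply mk_eq, r_curry_unique. auto.
Defined.

Definition rst {X Y} : tm [Prod X (Dia Y)] (Dia (Prod X Y)) := tletmap (tsnd x0) (tpair (tfst x1) x0).
Definition rmu {X} : tm [Dia (Dia X)] (Dia X) := tlet x0 x0.
Definition TDmap {X Y} (f : Hm X Y) : Hm (Dia X) (Dia Y) := lift1 rDmap f.
Definition Tst X Y : Hm (Prod X (Dia Y)) (Dia (Prod X Y)) := mk rst.
Definition Tmu X : Hm (Dia (Dia X)) (Dia X) := mk rmu.
Lemma TDmap_mk {X Y} (f : tm [X] Y) : TDmap (mk f) = mk (rDmap f).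
Proof. apply lift1_mk, rDmap_teq. Qed.

Ltac tm_norm := hind; unfold fprod, assoc; simpl; unfold Tid, Tpi1, Tpi2, Tst, Tmu;
  repeat (rewrite ?TDmap_mk, ?Tpair_mk, ?Tcomp_mk); apply mk_eq.


Lemma eq_teq {G A} (t u : tm G A) : t = u -> teq t u. Proof. intros ->; apply teq_refl. Qed.
Ltac eqfin := apply eq_teq; repeat (rewrite ?ren_as_sub, ?sub_sub; simpl);
  repeat (match goal with |- sub ?t _ = sub ?t _ => apply sub1_ext; simpl; repeat (rewrite ?ren_as_sub, ?sub_sub; simpl) | _ => f_equal end).
Ltac fin := unfold wk; repeat (rewrite ?ren_as_sub, ?sub_sub; simpl); try apply teq_refl; try (apply teq_sub1; fin).

Lemma r_Dmap_id {X} : teq (rDmap (@tvar [X] X VZ)) x0.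
Proof. unfold rDmap. simpl. apply teq_sym, teq_letmap_id. Qed.

Lemma r_Dmap_comp {X Y Z} (f : tm [X] Y) (g : tm [Y] Z) :
  teq (rDmap (rcomp g f)) (rcomp (rDmap g) (rDmap f)).
Proof.
  unfold rDmap, rcomp. simpl. apply teq_sym. eapply teq_trans. apply teq_letmap_letmap.
  apply teq_letmap. apply teq_refl. unfold subst_under. fin.
Qed.

Lemma r_st_unit {X} : teq (rcomp (rDmap (tsnd x0)) (@rst Unit X)) (tsnd x0).
Proof.
  unfold rDmap, rcomp, rst. simpl. eapply teq_trans. apply teq_letmap_letmap.
  unfold subst_under; simpl. eapply teq_trans. apply teq_letmap. apply teq_refl. apply teq_snd_beta.
  apply teq_sym, teq_letmap_id.
Qed.

Lemma r_st_natural {X X' Y Y'} (f : tm [X] X') (g : tm [Y] Y') :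
  teq (rcomp rst (tpair (rcomp f (tfst x0)) (rcomp (rDmap g) (tsnd x0))))
      (rcomp (rDmap (tpair (rcomp f (tfst x0)) (rcomp g (tsnd x0)))) rst).
Proof.
  unfold rDmap, rcomp, rst. simpl.
  apply teq_trans with (tletmap (tsnd x0) (tpair (sub f (scons (tfst x1) nosub)) (sub g (scons x0 nosub)))).
  - unfold wk; simpl. eapply teq_trans; [apply teq_letmap; [apply teq_snd_beta|
    apply teq_pair; [apply teq_fst_beta| apply teq_refl]]|].
    eapply teq_trans; [apply teq_letmap_letmap|]. apply teq_letmap; [apply teq_refl|].
    unfold subst_under; simpl. apply teq_pair; fin.
  - apply teq_sym. eapply teq_trans; [apply teq_letmap_letmap|]. apply teq_letmap; [apply teq_refl|].
    unfold subst_under; simpl. apply teq_pair; fin; first [apply teq_fst_beta | apply teq_snd_beta].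
Qed.

#[export] Instance teq_equiv G A : Equivalence (@teq G A).
Proof. split. intro; apply teq_refl. intros ? ?; apply teq_sym. intros ? ? ?; apply teq_trans. Qed.
#[export] Instance tpair_prop G A B : Proper (@teq G A ==> @teq G B ==> @teq G (Prod A B)) (@tpair G A B).
Proof. intros ? ? ? ? ? ?. apply teq_pair; auto. Qed.
#[export] Instance tfst_prop G A B : Proper (@teq G (Prod A B) ==> @teq G A) (@tfst G A B).
Proof. intros ? ? ?. apply teq_fst; auto. Qed.
#[export] Instance tsnd_prop G A B : Proper (@teq G (Prod A B) ==> @teq G B) (@tsnd G A B).
Proof. intros ? ? ?. apply teq_snd; auto. Qed.
#[export] Instance tlam_prop G A B : Proper (@teq (A::G) B ==> @teq G (Arr A B)) (@tlam G A B).
Proof. intros ? ? ?. apply teq_lam; auto. Qed.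
#[export] Instance tapp_prop G A B : Proper (@teq G (Arr A B) ==> @teq G A ==> @teq G B) (@tapp G A B).
Proof. intros ? ? ? ? ? ?. apply teq_app; auto. Qed.
#[export] Instance tletmap_prop G A B : Proper (@teq G (Dia A) ==> @teq (A::G) B ==> @teq G (Dia B)) (@tletmap G A B).
Proof. intros ? ? ? ? ? ?. apply teq_letmap; auto. Qed.
#[export] Instance tlet_prop G A B : Proper (@teq G (Dia A) ==> @teq (A::G) (Dia B) ==> @teq G (Dia B)) (@tlet G A B).
Proof. intros ? ? ? ? ? ?. apply teq_let; auto. Qed.

Ltac beta := repeat (rewrite ?teq_fst_beta, ?teq_snd_beta, ?teq_letmap_letmap, ?teq_let_letmap,
   ?teq_letmap_let, ?teq_let_let; unfold subst_under, wk_under, wk; simpl).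

Lemma r_st_assoc {X Y Z} :
  teq (rcomp (rDmap (tpair (rcomp (tfst x0) (tfst x0)) (tpair (rcomp (tsnd x0) (tfst x0)) (tsnd x0))))
         (@rst (Prod X Y) Z))
    (rcomp rst (rcomp (tpair (rcomp x0 (tfst x0)) (rcomp rst (tsnd x0)))
          (tpair (rcomp (tfst x0) (tfst x0)) (tpair (rcomp (tsnd x0) (tfst x0)) (tsnd x0))))).
Proof.
  unfold rcomp, rDmap, rst. simpl. beta. reflexivity.
Qed.

Lemma r_mu_natural {X Y} (t : tm [X] Y) : teq (rcomp (rDmap t) rmu) (rcomp rmu (rDmap (rDmap t))).
Proof. unfold rcomp, rDmap, rmu. simpl. beta. eqfin. Qed.

Lemma r_mu_assoc {X} : teq (rcomp rmu (@rmu (Dia X))) (rcomp rmu (rDmap rmu)).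
Proof. unfold rcomp, rDmap, rmu. simpl. beta. eqfin. Qed.

Lemma r_mu_strong {X Y} : teq (rcomp rmu (rcomp (rDmap rst) (@rst X (Dia Y))))
    (rcomp rst (tpair (rcomp x0 (tfst x0)) (rcomp rmu (tsnd x0)))).
Proof. unfold rcomp, rDmap, rmu, rst. simpl. beta. eqfin. Qed.

Definition TSJ : SJModel.
Proof.
  refine {| ccc := TCCC; D := Dia; Dmap := @TDmap; st := Tst; mu := Tmu |}.
  - intros X. tm_norm. apply r_Dmap_id.
  - intros X Y Z. tm_norm. apply r_Dmap_comp.
  - intros X X' Y Y'. tm_norm. apply r_st_natural.
  - intros X. tm_norm. apply r_st_unit.
  - intros X Y Z. tm_norm. apply r_st_assoc.
  - intros X Y. tm_norm. apply r_mu_natural.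
  - intros X. tm_norm. apply r_mu_assoc.
  - intros X Y. tm_norm. apply r_mu_strong.
Defined.


Notation ity' := (ity TSJ Base).
Notation ictx' := (ictx TSJ Base).

Fixpoint map_var {G A} (v : var G A) : var (map ity' G) (ity' A) :=
  match v in var G0 A0 return var (map ity' G0) (ity' A0) with
  | VZ => VZ
  | VS v' => VS (map_var v')
  end.

Fixpoint map_ty {G A} (t : tm G A) : tm (map ity' G) (ity' A) :=
  match t in tm G0 A0 return tm (map ity' G0) (ity' A0) with
  | tvar v => tvar (map_var v)
  | tunit => tunit
  | tpair t1 t2 => tpair (map_ty t1) (map_ty t2)
  | tfst t1 => tfst (map_ty t1)
  | tsnd t1 => tsnd (map_ty t1)
  | tlam t1 => tlam (map_ty t1)
  | tapp t1 t2 => tapp (map_ty t1) (map_ty t2)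
  | tletmap t1 t2 => tletmap (map_ty t1) (map_ty t2)
  | tlet t1 t2 => tlet (map_ty t1) (map_ty t2)
  end.

Fixpoint proj (G : ctx) : substitution (map ity' G) [ictx' G] :=
  match G return substitution (map ity' G) [ictx' G] with
  | [] => nosub
  | A :: G' => scons (tsnd x0) (fun C v => sub (proj G' C v) (scons (tfst x0) nosub))
  end.

Lemma proj_lift G A : forall C (v : var (ity' A :: map ity' G) C),
  teq (sub (proj (A :: G) C v) (scons (tpair x1 x0) nosub)) (sub_lift (proj G) v).
Proof.
  apply var_case; simpl.
  - apply teq_snd_beta.
  - intros. unfold wk. rewrite sub_sub, ren_as_sub. apply teq_sub1. simpl. apply teq_fst_beta.
Qed.

Lemma ivar_proj {G A} (v : var G A) : ivar TSJ Base v = mk (proj G _ (map_var v)).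
Proof.
  induction v; simpl.
  - reflexivity.
  - rewrite IHv. unfold Tpi1. rewrite Tcomp_mk. reflexivity.
Qed.

Lemma key {G A} (t : tm G A) : interp TSJ Base t = mk (sub (map_ty t) (proj G)).
Proof.
  induction t; simpl.
  - apply ivar_proj.
  - reflexivity.
  - rewrite IHt1, IHt2. apply Tpair_mk.
  - rewrite IHt. unfold Tpi1. rewrite Tcomp_mk. reflexivity.
  - rewrite IHt. unfold Tpi2. rewrite Tcomp_mk. reflexivity.
  - rewrite IHt. etransitivity; [apply Tcurry_mk|]. apply mk_eq. unfold rcurry. apply teq_lam.
    rewrite sub_sub. apply teq_sub_cong. apply proj_lift.
  - rewrite IHt1, IHt2. unfold Tev. rewrite Tpair_mk, Tcomp_mk. apply mk_eq.
    unfold rcomp. simpl. rewrite teq_fst_beta, teq_snd_beta. reflexivity.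
  - rewrite IHt1, IHt2. unfold Tid, Tst. rewrite Tpair_mk, TDmap_mk, !Tcomp_mk. apply mk_eq.
    unfold rcomp, rDmap, rst. simpl. eapply teq_trans; [apply teq_letmap_letmap|]. unfold subst_under. apply teq_letmap; [apply teq_snd_beta|].
    rewrite !sub_sub. apply teq_sub_cong. apply var_case.
    + simpl. beta. reflexivity.
    + intros. simpl. unfold wk. rewrite !sub_sub, !ren_as_sub. apply teq_sub1. simpl. beta. reflexivity.
  - rewrite IHt1, IHt2. unfold Tid, Tst, Tmu. rewrite Tpair_mk, TDmap_mk, !Tcomp_mk. apply mk_eq.
    unfold rcomp, rDmap, rst, rmu. simpl.
    eapply teq_trans; [apply teq_let_letmap|]. unfold subst_under. simpl.
    eapply teq_trans; [apply teq_let_letmap|]. unfold subst_under.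
    apply teq_let; [apply teq_snd_beta|].
    rewrite !sub_sub. apply teq_sub_cong. apply var_case.
    + simpl. beta. reflexivity.
    + intros. simpl. unfold wk. rewrite !sub_sub, !ren_as_sub. apply teq_sub1. simpl. beta. reflexivity.
Qed.

Fixpoint tuple (G : ctx) : tm (map ity' G) (ictx' G) :=
  match G return tm (map ity' G) (ictx' G) with
  | [] => tunit
  | A :: G' => tpair (wk (ity' A) (tuple G')) x0
  end.

Lemma proj_tuple G : forall C (v : var (map ity' G) C),
  teq (sub (proj G C v) (scons (tuple G) nosub)) (tvar v).
Proof.
  induction G; simpl.
  - intros C v. destruct (var_nil v).
  - apply var_case; simpl.
    + apply teq_snd_beta.
    + intros C v. rewrite sub_sub.
      transitivity (sub (proj G C v) (scons (wk (ity' a) (tuple G)) nosub)).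
      { apply teq_sub1. simpl. apply teq_fst_beta. }
      transitivity (wk (ity' a) (sub (proj G C v) (scons (tuple G) nosub))).
      { apply eq_teq. unfold wk. rewrite ren_sub. apply sub1_ext. reflexivity. }
      unfold wk. change (tvar (@VS _ _ (ity' a) v)) with (ren (tvar v) (fun C v => @VS _ C (ity' a) v)).
      apply teq_ren. apply IHG.
Qed.

Lemma ity_id A : ity' A = A.
Proof. induction A; simpl; congruence. Qed.

Lemma ctx_id G : map ity' G = G.
Proof. induction G; simpl; auto. f_equal; auto. apply ity_id. Qed.

Ltac jm := intros; subst; repeat match goal with H : JMeq _ _ |- _ => apply JMeq_eq in H; subst end; reflexivity.

Lemma VZ_JM G G' A A' : G = G' -> A = A' -> JMeq (@VZ G A) (@VZ G' A'). Proof. jm. Qed.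
Lemma VS_JM G G' A A' B B' (v : var G A) (v' : var G' A') :
  G = G' -> A = A' -> B = B' -> JMeq v v' -> JMeq (@VS G A B v) (@VS G' A' B' v'). Proof. jm. Qed.
Lemma tvar_JM G G' A A' (v : var G A) (v' : var G' A') :
  G = G' -> A = A' -> JMeq v v' -> JMeq (tvar v) (tvar v'). Proof. jm. Qed.
Lemma tunit_JM G G' : G = G' -> JMeq (@tunit G) (@tunit G'). Proof. jm. Qed.
Lemma tpair_JM G G' A A' B B' (t : tm G A) (t' : tm G' A') (u : tm G B) (u' : tm G' B') :
  G = G' -> A = A' -> B = B' -> JMeq t t' -> JMeq u u' -> JMeq (tpair t u) (tpair t' u'). Proof. jm. Qed.
Lemma tfst_JM G G' A A' B B' (t : tm G (Prod A B)) (t' : tm G' (Prod A' B')) :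
  G = G' -> A = A' -> B = B' -> JMeq t t' -> JMeq (tfst t) (tfst t'). Proof. jm. Qed.
Lemma tsnd_JM G G' A A' B B' (t : tm G (Prod A B)) (t' : tm G' (Prod A' B')) :
  G = G' -> A = A' -> B = B' -> JMeq t t' -> JMeq (tsnd t) (tsnd t'). Proof. jm. Qed.
Lemma tlam_JM G G' A A' B B' (t : tm (A :: G) B) (t' : tm (A' :: G') B') :
  G = G' -> A = A' -> B = B' -> JMeq t t' -> JMeq (tlam t) (tlam t'). Proof. jm. Qed.
Lemma tapp_JM G G' A A' B B' (t : tm G (Arr A B)) (t' : tm G' (Arr A' B')) (u : tm G A) (u' : tm G' A') :
  G = G' -> A = A' -> B = B' -> JMeq t t' -> JMeq u u' -> JMeq (tapp t u) (tapp t' u'). Proof. jm. Qed.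
Lemma tletmap_JM G G' A A' B B' (t : tm G (Dia A)) (t' : tm G' (Dia A')) (u : tm (A :: G) B) (u' : tm (A' :: G') B') :
  G = G' -> A = A' -> B = B' -> JMeq t t' -> JMeq u u' -> JMeq (tletmap t u) (tletmap t' u'). Proof. jm. Qed.
Lemma tlet_JM G G' A A' B B' (t : tm G (Dia A)) (t' : tm G' (Dia A')) (u : tm (A :: G) (Dia B)) (u' : tm (A' :: G') (Dia B')) :
  G = G' -> A = A' -> B = B' -> JMeq t t' -> JMeq u u' -> JMeq (tlet t u) (tlet t' u'). Proof. jm. Qed.

Lemma map_var_JM {G A} (v : var G A) : JMeq (map_var v) v.
Proof.
  induction v; [apply VZ_JM | apply VS_JM]; auto using ctx_id, ity_id.
Qed.

Lemma map_ty_JM {G A} (t : tm G A) : JMeq (map_ty t) t.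
Proof.
  induction t;
  first [ apply tvar_JM | apply tunit_JM | apply tpair_JM | apply tfst_JM | apply tsnd_JM
        | apply tlam_JM | apply tapp_JM | apply tletmap_JM | apply tlet_JM ];
  auto using ctx_id, ity_id, map_var_JM.
Qed.

Lemma teq_unmap {G A} (t u : tm G A) : teq (map_ty t) (map_ty u) -> teq t u.
Proof.
  assert (Gen : forall G' A' (x y : tm G' A'), teq x y -> G' = G -> A' = A -> JMeq x t -> JMeq y u -> teq t u).
  { intros G' A' x y Hxy e1 e2 j1 j2. subst. auto. }
  intro H. eapply Gen; eauto using ctx_id, ity_id, map_ty_JM.
Qed.

Lemma completeness {G A} (t u : tm G A) :
  (forall (M : SJModel) (b : Ob M), interp M b t = interp M b u) -> teq t u.
Proof.
  intro H. specialize (H TSJ Base). rewrite !key in H. apply mk_inj in H.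
  apply teq_unmap.
  pose proof (teq_sub _ _ H _ (scons (tuple G) nosub)) as H'. rewrite !sub_sub in H'.
  rewrite <- (sub_ids (map_ty t)), <- (sub_ids (map_ty u)).
  eapply teq_trans; [|eapply teq_trans; [exact H'|]].
  - apply teq_sym, teq_sub_cong. intros. apply proj_tuple.
  - apply teq_sub_cong. intros. apply proj_tuple.
Qed.


Theorem proposition3p3 (G : ctx) (A : ty) (t u : tm G A) :
  teq t u <-> (forall (M : SJModel) (b : Ob M), interp M b t = interp M b u).
Proof.
  split.
  - intros H M b. exact (soundness M b t u H).
  - apply completeness.
Qed.
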